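(* Let $\mathcal{N}$ be a closed chemical reaction network, $\{\omega^1,\dots,\omega^d\}$ a reduced basis of $\Gamma^\perp$, $\widetilde f_\kappa$ the associated extended rate function, and $\kappa^o$, $g_{\kappa^o}$ as in the context. Then for each $c$, the determinant $\det(J_c(\widetilde f_\kappa))$, viewed as a polynomial in the rate constants $(k_{y\to y'})_{y\to y'\in\mathcal{R}}$, coincides with the sum of the terms of total degree $s$ (in these rate constants) in the expansion of $(-1)^d\det(J_c(g_{\kappa^o}))$.
   Context: A chemical reaction network $\mathcal{N}=(\mathcal{S},\mathcal{C},\mathcal{R})$ consists of a finite set of species $\mathcal{S}=\{S_1,\dots,S_n\}$, a finite set of complexes $\mathcal{C}\subset\mathbb{Z}_{\ge 0}^n$ (species $S_i$ identified with the $i$-th standard basis vector; the zero complex allowed), and a finite set of reactions $\mathcal{R}\subset\mathcal{C}\times\mathcal{C}$, written $y\to y'$, with $y\ne y'$. A rate vector is $\kappa=(k_{y\to y'})\in\mathbb{R}_+^{\mathcal{R}}$ ($\mathbb{R}_+$ the positive reals); the mass-action species formation rate function is $f_\kappa(c)=\sum_{y\to y'\in\mathcal{R}}k_{y\to y'}c^y(y'-y)$, $c^y=\prod_i c_i^{y_i}$, components $f_{\kappa,i}$. The stoichiometric subspace is $\Gamma=\mathrm{span}\{y'-y:y\to y'\in\mathcal{R}\}$, $s=\dim\Gamma$, $d=n-s$; closed means $\Gamma\ne\mathbb{R}^n$. A basis $\{\omega^1,\dots,\omega^d\}$ of $\Gamma^\perp$ with $\omega^i=(\lambda^i_1,\dots,\lambda^i_n)$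 is reduced if $\lambda^i_i=1$ and $\lambda^i_j=0$ for $j\in\{1,\dots,d\}$, $j\ne i$ (species assumed ordered so one exists). The extended rate function is $\widetilde f_\kappa(c)=(\omega^1\cdot c,\dots,\omega^d\cdot c,f_{\kappa,d+1}(c),\dots,f_{\kappa,n}(c))$; $J_c$ denotes the Jacobian at $c$. Let $\mathcal{O}(\mathcal{N})=\{i:S_i\to 0\notin\mathcal{R}\}$ and $\mathcal{N}^o$ the fully open network with reactions $\mathcal{R}\cup\{S_i\to 0:i=1,\dots,n\}$. The rate vector $\kappa^o$ of $\mathcal{N}^o$ agrees with $\kappa$ on $\mathcal{R}$ and has $k_{S_i\to 0}=1$ for $i\in\mathcal{O}(\mathcal{N})$; $g_{\kappa^o}(c)=f_\kappa(c)-(\delta_1c_1,\dots,\delta_nc_n)$ is the species formation rate function of $\mathcal{N}^o$ with rate vector $\kappa^o$, where $\delta_i=1$ if $i\in\mathcal{O}(\mathcal{N})$ and $0$ otherwise. *)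

(* Defs.v *)
From HB Require Import structures.
From mathcomp Require Import all_boot all_order all_algebra.
From mathcomp Require Export mpoly.
Set Implicit Arguments. Unset Strict Implicit. Unset Printing Implicit Defensive.
Import Order.TTheory GRing.Theory Num.Theory.
Local Open Scope ring_scope.

(* A reaction network with species S_0..S_(n-1) (type 'I_n) and reactions
   indexed by 'I_m; reaction r is  src r -> tgt r  (complexes are monomials
   'X_{1..n}, i.e. vectors in Z_{>=0}^n).  Rate constants k_r are treated as
   formal variables: the coefficient ring of all rate-function polynomials is
   {mpoly R[m]} (polynomials in the rate constants), and the concentration
   variables c_0..c_(n-1) are the variables of {mpoly {mpoly R[m]}[n]}. *)

Section CRN.
Variables (R : fieldType) (n m : nat) (src tgt : 'I_m -> 'X_{1..n}).

Local Notation K := {mpoly R[m]}.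

(* matrix whose rows are the reaction vectors y' - y; its row space is Gamma *)
Definition stoich_mx : 'M[R]_(m, n) :=
  \matrix_(r < m, i < n) ((tgt r i)%:R - (src r i)%:R).

Definition frate (i : 'I_n) : {mpoly K[n]} :=
  \sum_(r < m) (((tgt r i)%:R - (src r i)%:R : R) *: ('X_r : K)) *: 'X_[src r].

Definition in_open (i : 'I_n) : bool :=
  ~~ [exists r : 'I_m, (src r == U_(i)%MM) && (tgt r == 0%MM)].

Definition grate (i : 'I_n) : {mpoly K[n]} :=
  frate i - ((in_open i)%:R : K) *: 'X_i.

Definition omega_lin (d : nat) (W : 'M[R]_(d, n)) (k : 'I_d) : {mpoly K[n]} :=
  \sum_(j < n) (((W k j)%:MP : K) *: 'X_j).

Definition ext_rate (d : nat) (W : 'M[R]_(d, n)) (i : 'I_n) : {mpoly K[n]} :=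
  match (insub (val i) : option 'I_d) with
  | Some k => omega_lin W k
  | None => frate i
  end.

Definition jac (F : 'I_n -> {mpoly K[n]}) (c : 'I_n -> R) : 'M[K]_n :=
  \matrix_(i < n, j < n) (mderiv j (F i)).@[fun k => ((c k)%:MP : K)].

End CRN.

Definition deg_part (R : ringType) (m s : nat) (p : {mpoly R[m]}) : {mpoly R[m]} :=
  @pihomog m R mdeg s p.

(* Main.v *)
Require Import Defs.
From HB Require Import structures.
From mathcomp Require Import all_boot all_order all_algebra.
From mathcomp Require Import mpoly.
From mathcomp Require Import zify perm.
Import GRing.Theory Num.Theory.
Local Open Scope ring_scope.

Section Deg.
Set Implicit Arguments. Unset Strict Implicit.
Variables (R : comNzRingType) (m : nat).
Local Notation K := {mpoly R[m]}.
Implicit Types (p q c : K).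

Definition ltdeg (D : nat) (p : K) := {in msupp p, forall mm, (mdeg mm < D)%N}.

Lemma ltdeg_le D p : p \is D.-homog -> {in msupp p, forall mm, (mdeg mm <= D)%N}.
Proof. by move=> /dhomog_mf h mm /h ->. Qed.

Lemma ltdeg0 D : ltdeg D 0.
Proof. by move=> mm; rewrite msupp0. Qed.

Lemma ltdegD D p q : ltdeg D p -> ltdeg D q -> ltdeg D (p + q).
Proof.
move=> hp hq mm /msuppD_le; rewrite mem_cat => /orP[/hp|/hq] //.
Qed.

Lemma ltdegM_gen a b p q : ltdeg a p -> {in msupp q, forall mm, (mdeg mm <= b)%N} ->
  ltdeg (a + b) (p * q).
Proof.
move=> hp hq mm /msuppM_le /allpairsP [[m1 m2] [/= /hp h1 /hq h2 ->]].
rewrite mdegD; exact: leq_trans (leq_add h1 h2) _.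
Qed.

Lemma ltdegM_gen2 a b p q : {in msupp p, forall mm, (mdeg mm <= a)%N} -> ltdeg b q ->
  ltdeg (a + b) (p * q).
Proof.
move=> hp hq mm /msuppM_le /allpairsP [[m1 m2] [/= /hp h1 /hq h2 ->]].
rewrite mdegD addnC -addSn; rewrite addnC; exact: leq_add.
Qed.

Lemma ltdeg_homog d p : p \is d.-homog -> ltdeg d.+1 p.
Proof. by move=> /ltdeg_le h mm /h. Qed.

Lemma ltdeg_leW a p : ltdeg a p -> {in msupp p, forall mm, (mdeg mm <= a)%N}.
Proof. by move=> h mm /h /ltnW. Qed.

Lemma prod_deg (I : finType) (F G : I -> K) (e : I -> nat) :
  (forall i, F i \is (e i).-homog) -> (forall i, ltdeg (e i) (G i)) ->
  \prod_i F i \is (\sum_i e i)%N.-homog /\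
  exists r, ltdeg (\sum_i e i)%N r /\ \prod_i (F i + G i) = \prod_i F i + r.
Proof.
move=> hF hG.
pose P (D : nat) (x y : K) := y \is D.-homog /\ exists r, ltdeg D r /\ x = y + r.
have : P (\sum_i e i)%N (\prod_i (F i + G i)) (\prod_i F i).
  apply: (big_rec3 P).
    split; first exact: dhomog1.
    by exists 0; split; [exact: ltdeg0 | rewrite addr0].
  move=> i D x y _ [hy [r [hr ->]]]; split; first exact: dhomogM.
  exists (F i * r + G i * y + G i * r); split.
    apply: ltdegD; first apply: ltdegD.
    - apply: ltdegM_gen2; last exact: hr. apply: ltdeg_le. exact: hF.
    - apply: ltdegM_gen; first exact: hG. exact: ltdeg_le.
    - apply: ltdegM_gen; first exact: hG. exact: ltdeg_leW.
  by rewrite mulrDl !mulrDr !addrA.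
by [].
Qed.

Lemma pihomog_lt D p : ltdeg D p -> pihomog mdeg D p = 0.
Proof.
move=> h; rewrite pihomogE big_seq_cond big1 // => mm /andP[/h + /eqP].
by move=> + e; rewrite e ltnn.
Qed.

Lemma pihomog_main (I : finType) (c : K) (F G : I -> K) (e : I -> nat) :
  c \is 0.-homog ->
  (forall i, F i \is (e i).-homog) -> (forall i, ltdeg (e i) (G i)) ->
  pihomog mdeg (\sum_i e i)%N (c * \prod_i (F i + G i)) = c * \prod_i F i.
Proof.
move=> hc hF hG; have [hp [r [hr ->]]] := prod_deg hF hG.

rewrite mulrDr pihomogD pihomog_dE; last by have := dhomogM hc hp.
rewrite pihomog_lt ?addr0 //.
by have := ltdegM_gen2 (ltdeg_le hc) hr; rewrite add0n.
Qed.

Lemma homogC x : (x%:MP : K) \is 0.-homog.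
Proof.
apply/dhomogP => mm; rewrite msuppC; case: eqP => //= _.
by rewrite inE => /eqP ->; rewrite mdeg0.
Qed.

End Deg.

Section Main.
Set Implicit Arguments. Unset Strict Implicit.
Variables (R : realFieldType) (n m : nat) (src tgt : 'I_m -> 'X_{1..n}).
Variable (c : 'I_n -> R).
Local Notation K := {mpoly R[m]}.
Definition vv : 'I_n -> K := fun k => (c k)%:MP.
Definition ee (r : 'I_m) (j : 'I_n) : K := (mderiv j ('X_[src r] : {mpoly K[n]})).@[vv].
Definition aa (r : 'I_m) (i : 'I_n) : R := (tgt r i)%:R - (src r i)%:R.

Lemma mderiv_sumI (I : finType) (F : I -> {mpoly K[n]}) j :
  mderiv j (\sum_i F i) = \sum_i mderiv j (F i).
Proof. exact: raddf_sum. Qed.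

Lemma meval_sumI (I : finType) (F : I -> {mpoly K[n]}) (v : 'I_n -> K) :
  (\sum_i F i).@[v] = \sum_i (F i).@[v].
Proof. exact: raddf_sum. Qed.

Lemma Jf_entry i j : jac (frate R src tgt) c i j = \sum_r (aa r i *: 'X_r) * ee r j.
Proof.
rewrite mxE /frate mderiv_sumI meval_sumI; apply: eq_bigr => r _.
by rewrite mderivZ mevalZ.
Qed.

Lemma ee_const r j : exists y, ee r j = y%:MP.
Proof.
rewrite /ee mderivX mevalZ mevalX /vv.
exists ((src r j)%:R * \prod_i c i ^+ (src r - U_(j))%MM i).
by rewrite mpolyCM rmorph_prod mpolyC_nat; congr (_ * _); apply: eq_bigr => i _; rewrite rmorphXn.
Qed.

Lemma ee_homog r j : ee r j \is 0.-homog.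
Proof. by have [y ->] := ee_const r j; apply: homogC. Qed.

Lemma Jf_homog i j : jac (frate R src tgt) c i j \is 1.-homog.
Proof.
rewrite Jf_entry; apply: rpred_sum => r _.
rewrite -[1%N]addn0; apply: dhomogM; last exact: ee_homog.
apply: dhomogZ; rewrite dhomogX. by apply/eqP; apply: mdeg1.
Qed.

Lemma Jg_entry i j : jac (grate R src tgt) c i j =
  jac (frate R src tgt) c i j - (in_open src tgt i)%:R * (i == j)%:R.
Proof.
rewrite !mxE /grate mderivB mevalB mderivZ mevalZ mderivX mnm1E.
case: eqVneq => [->|_]; last by rewrite scale0r meval0.
have -> : (U_(j) - U_(j) = 0 :> 'X_{1..n})%MM by rewrite -{1}[U_(j)%MM]add0m addmK.
by rewrite mpolyX0 scale1r meval1.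
Qed.


Lemma homog_nat k : (k%:R : K) \is 0.-homog.
Proof. by rewrite -mpolyC_nat homogC. Qed.

Lemma sum_delta_l (F : 'I_n -> K) i : \sum_j (i == j)%:R * F j = F i.
Proof.
rewrite (bigD1 i) //= eqxx mul1r big1 ?addr0 // => j /negbTE.
by rewrite eq_sym => ->; rewrite mul0r.
Qed.

Variables (d : nat) (W : 'M[R]_(d, n)).
Hypothesis hWk : W *m (stoich_mx R src tgt)^T = 0.

Lemma Wa k r : \sum_i W k i * aa r i = 0.
Proof.
transitivity ((W *m (stoich_mx R src tgt)^T) k r); last by rewrite hWk mxE.
by rewrite mxE; apply: eq_bigr => i _; rewrite !mxE.
Qed.

Lemma WJf k l : \sum_j (W k j)%:MP * jac (frate R src tgt) c j l = 0.
Proof.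
under eq_bigr do rewrite Jf_entry mulr_sumr.
rewrite exchange_big big1 // => r _.
under eq_bigr do rewrite mulrA mul_mpolyC scalerA.
by rewrite -mulr_suml -scaler_suml Wa scale0r mul0r.
Qed.

Lemma Wdelta k j : W k j * (in_open src tgt j)%:R = W k j.
Proof.
case hj: (in_open src tgt j); first by rewrite mulr1.
move/negbFE: hj => /existsP [r /andP [/eqP hs /eqP ht]].
have := Wa k r; rewrite (bigD1 j) //= big1 ?addr0.
  by rewrite /aa hs ht mnm0E mnm1E eqxx sub0r mulrN1 => /eqP; rewrite oppr_eq0 => /eqP ->; rewrite mul0r.
move=> i hij; rewrite /aa hs ht mnm0E mnm1E eq_sym (negbTE hij) subrr mulr0 //.
Qed.


Definition W' (i j : 'I_n) : R :=
  match (insub (val i) : option 'I_d) with Some k => W k j | None => 0 end.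

Lemma dX i j : (mderiv j ('X_i : {mpoly K[n]})).@[vv] = (i == j)%:R.
Proof.
rewrite mderivX mnm1E mevalZ.
case: eqVneq => [->|_]; last by rewrite mul0r.
have -> : (U_(j) - U_(j) = 0 :> 'X_{1..n})%MM by rewrite -{1}[U_(j)%MM]add0m addmK.
by rewrite mpolyX0 meval1 mulr1.
Qed.

Lemma Jext_entry i j : jac (ext_rate src tgt W) c i j =
  if (i < d)%N then (W' i j)%:MP else jac (frate R src tgt) c i j.
Proof.
rewrite /W' /jac !mxE /ext_rate; case: insubP => [k hk vk | hk]; last by rewrite (negbTE hk).
rewrite hk /omega_lin mderiv_sumI meval_sumI.
under eq_bigr do rewrite mderivZ mevalZ dX.
rewrite (bigD1 j) //= eqxx mulr1 big1 ?addr0 // => j' /negbTE ->.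
by rewrite mulr0.
Qed.

Lemma WJf' i l : \sum_j (W' i j)%:MP * jac (frate R src tgt) c j l = 0.
Proof.
rewrite /W'; case: insubP => [k _ _ | _]; first exact: WJf.
by rewrite big1 // => j _; rewrite mpolyC0 mul0r.
Qed.

Lemma Wdelta' i j : W' i j * (in_open src tgt j)%:R = W' i j.
Proof. rewrite /W'; case: insubP => [k _ _ | _]; [exact: Wdelta | by rewrite mul0r]. Qed.

Definition Qm : 'M[K]_n := \matrix_(i, j) if (i < d)%N then (W' i j)%:MP else (i == j)%:R.

Lemma Nm_entry i l : (Qm *m jac (grate R src tgt) c) i l =
  if (i < d)%N then - (W' i l)%:MP else jac (grate R src tgt) c i l.
Proof.
rewrite mxE; under eq_bigr do rewrite mxE.
case: ifP => hi; last by apply: sum_delta_l.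
under eq_bigr do rewrite Jg_entry mulrBr.
rewrite sumrB WJf' sub0r; congr (- _).
rewrite (bigD1 l) //= eqxx mulr1 big1 ?addr0.
  by rewrite -mpolyC_nat -mpolyCM Wdelta'.
by move=> j /negbTE ->; rewrite mulr0 mulr0.
Qed.

Hypothesis hred : forall (k : 'I_d) (j : 'I_n), (j < d)%N -> W k j = (k == j :> nat)%:R.

Lemma W'red (i j : 'I_n) : (j < d)%N -> W' i j = (i == j)%:R.
Proof.
move=> hj; rewrite /W'; case: insubP => [k _ vk | hi].
  by rewrite hred // vk.
case: eqVneq => // eij; move: hi; by rewrite eij hj.
Qed.

Lemma det_Qm : \det Qm = 1.
Proof.
rewrite -det_tr det_trig.
  by rewrite big1 // => i _; rewrite !mxE eqxx; case: ifP => // hi; rewrite W'red // eqxx.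
apply/is_trig_mxP => i j hij; rewrite !mxE.
have nij : (j == i) = false by apply/negbTE; rewrite neq_ltn hij orbT.
case: ifP => hj; last by rewrite nij.
by rewrite W'red ?nij ?mpolyC0 // (ltn_trans hij hj).
Qed.

End Main.

Lemma sum_lt (n d : nat) : (\sum_(i < n) (i < d : nat) = minn d n)%N.
Proof.
elim: n => [|n IH]; first by rewrite big_ord0 minn0.
rewrite big_ord_recr /= IH; case: (ltnP n d) => h /=; lia.
Qed.

Lemma sum_ge (n d : nat) : (d <= n)%N -> (\sum_(i < n) (d <= i : nat) = n - d)%N.
Proof.
move=> hdn.
have H : (\sum_(i < n) ((i < d : nat) + (d <= i : nat)) = n)%N.
  rewrite (eq_bigr (fun _ => 1%N)) ?sum_nat_const ?card_ord ?muln1 // => i _.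
  by case: ltnP.
move: H; rewrite big_split /= sum_lt; lia.
Qed.

Lemma pihomog_sum (R : comNzRingType) (m s : nat) (I : finType) (F : I -> {mpoly R[m]}) :
  pihomog mdeg s (\sum_i F i) = \sum_i pihomog mdeg s (F i).
Proof. exact: raddf_sum. Qed.

Lemma sign_aux (R : comNzRingType) (x y P : R) : x * x = 1 -> y * P = (x * y) * (x * P).
Proof. by move=> hx; rewrite mulrACA hx mul1r. Qed.

Lemma sign_sq (R : comNzRingType) (d : nat) : ((-1) ^+ d * (-1) ^+ d : R) = 1.
Proof. by rewrite -exprMn mulrNN mulr1 expr1n. Qed.

Theorem corollary7p2 (R : realFieldType) (n m d : nat)
    (src tgt : 'I_m -> 'X_{1..n}) (W : 'M[R]_(d, n)) :
  (* reactions y -> y' with y <> y', and R is a set of pairs *)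
  (forall r : 'I_m, src r != tgt r) ->
  injective (fun r : 'I_m => (src r, tgt r)) ->
  (* closed: Gamma <> R^n *)
  (\rank (stoich_mx R src tgt) < n)%N ->
  (* the rows of W form a basis of Gamma^perp *)
  row_free W ->
  (W == kermx (stoich_mx R src tgt)^T)%MS ->
  (* the basis is reduced *)
  (forall (k : 'I_d) (j : 'I_n), (j < d)%N -> W k j = (k == j :> nat)%:R) ->
  forall c : 'I_n -> R,
    \det (jac (ext_rate src tgt W) c) =
    deg_part (\rank (stoich_mx R src tgt))
      ((-1) ^+ d * \det (jac (grate R src tgt) c)).
Proof.
move=> _ _ _ hfree hW hred c.
have hWk : W *m (stoich_mx R src tgt)^T = 0.
  by apply/sub_kermxP; case/andP: hW.
have hd : d = (n - \rank (stoich_mx R src tgt))%N.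
  move/eqP: hfree => <-; rewrite (eqmx_rank hW) mxrank_ker mxrank_tr //.
have hsn := rank_leq_col (stoich_mx R src tgt).
have hs : \rank (stoich_mx R src tgt) = \sum_(i < n) (d <= i : nat).
  rewrite sum_ge; lia.
rewrite hs.
have eQ : \det (jac (grate R src tgt) c) =
    \det (Qm m W *m jac (grate R src tgt) c).
  by rewrite det_mulmx (det_Qm m hred) mul1r.
rewrite [in RHS]eQ.
rewrite /determinant mulr_sumr /deg_part pihomog_sum; apply: eq_bigr => s0 _.
pose s : 'S_n := s0.
under [in RHS]eq_bigr do rewrite (Nm_entry c hWk).
pose F (i : 'I_n) := if (i < d)%N then - (W' W i (s i))%:MP
  else jac (frate R src tgt) c i (s i).
pose G (i : 'I_n) : {mpoly R[m]} := if (i < d)%N then 0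
  else - ((in_open src tgt i)%:R * (i == s i)%:R).
have eFG : \prod_(i < n) (if (i < d)%N then - (W' W i (s i))%:MP
    else jac (grate R src tgt) c i (s i)) = \prod_(i < n) (F i + G i).
  apply: eq_bigr => i _; rewrite /F /G; case hi: (i < d)%N; first exact: (esym (addr0 _)).
  exact (Jg_entry src tgt c i (s i)).
idtac "A".
rewrite [in RHS]eFG.
pose e (i : 'I_n) : nat := (d <= i)%N.
have hc : ((-1) ^+ d * (-1) ^+ s : {mpoly R[m]}) \is 0.-homog.
  have h1 : (-1 : {mpoly R[m]}) \is 0.-homog.
    by rewrite -mpolyC1 -mpolyCN; apply: homogC.
  by have := dhomogM (dhomogMn d h1) (dhomogMn s h1); rewrite !mul0n.
have hF : forall i, F i \is (e i).-homog.
  move=> i; rewrite /F /e; case hi: (i < d)%N.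
    by rewrite leqNgt hi /= -mpolyCN; apply: homogC.
  by rewrite leqNgt hi /=; apply: Jf_homog.
have hG : forall i, ltdeg (e i) (G i).
  move=> i; rewrite /G /e; case hi: (i < d)%N; first exact: ltdeg0.
  rewrite leqNgt hi /=; apply: ltdeg_homog; rewrite rpredN.
  by have := dhomogM (homog_nat R m (in_open src tgt i)) (homog_nat R m (i == s i)).
rewrite [in RHS]mulrA (pihomog_main hc hF hG).
have eF : \prod_(i < n) F i = (-1) ^+ d * \prod_(i < n) jac (ext_rate src tgt W) c i (s i).
  transitivity (\prod_(i < n) ((-1) ^+ ((i < d)%N : nat) * jac (ext_rate src tgt W) c i (s i))).
    apply: eq_bigr => i _; rewrite Jext_entry /F; case hi: (i < d)%N.
      by rewrite expr1 mulN1r.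
    by rewrite expr0 mul1r.
  rewrite big_split /= prodrXr sum_lt.
  by have -> : minn d n = d by lia.
rewrite eF; apply: sign_aux; exact: sign_sq.
Qed.
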